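(* For all $r,s\ge1$, as an identity of polynomials in $q$, $$\sum_{C\ \text{maximal}}(q-1)^{r+s-l(C)-1}=\sum_{m=0}^{\min(r-1,s-1)}\binom{r-1}{m}\binom{s-1}{m}q^{m},$$ where the sum runs over all maximal cells $C$ for $(r,s)$.
   Context: A cell (for given $r,s$) is a finite (possibly empty) sequence of distinct pairs $(i_1,j_1),\dots,(i_l,j_l)$ with $1\le i_k\le r$, $1\le j_k\le s$, $i_1\le\cdots\le i_l$ and $j_1\le\cdots\le j_l$; $l(C)=l$ is its length. The cell is maximal if $\{i_1,\dots,i_l\}=\{1,\dots,r\}$ and $\{j_1,\dots,j_l\}=\{1,\dots,s\}$. *)

(* Defs.v *)
From HB Require Import structures.
From mathcomp Require Import all_boot all_order all_algebra.
Set Implicit Arguments. Unset Strict Implicit. Unset Printing Implicit Defensive.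
Import Order.TTheory GRing.Theory Num.Theory.

(* Indices are 0-based: row i+1 of the paper is (i : 'I_r), column j+1 is (j : 'I_s). *)

Definition is_cell (r s : nat) (c : seq ('I_r * 'I_s)) : bool :=
  [&& uniq c,
      sorted leq [seq val p.1 | p <- c] &
      sorted leq [seq val p.2 | p <- c]].

Definition is_maximal_cell (r s : nat) (c : seq ('I_r * 'I_s)) : bool :=
  [&& is_cell c,
      [forall i : 'I_r, i \in [seq p.1 | p <- c]] &
      [forall j : 'I_s, j \in [seq p.2 | p <- c]]].

(* Main.v *)
Require Import Defs.
From HB Require Import structures.
From mathcomp Require Import all_boot all_order all_algebra.
From mathcomp Require Import zify ring.
Import Order.TTheory GRing.Theory Num.Theory.

Lemma sorted_head_le (a : nat) s z : sorted leq (a :: s) -> z \in a :: s -> a <= z.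
Proof.
move=> /= hp; rewrite inE => /orP [/eqP -> //|hz].
by have := order_path_min leq_trans hp => /allP /(_ _ hz).
Qed.

Lemma sorted_le_last (a : nat) s z : sorted leq (a :: s) -> z \in a :: s -> z <= last a s.
Proof.
elim: s a z => [|b s IH] a z /=; first by rewrite inE => _ /eqP ->.
move=> /andP [hab hp]; rewrite inE => /orP [/eqP ->|hz].
  by apply: leq_trans hab _; apply: IH; rewrite ?inE ?eqxx.
by apply: IH.
Qed.

Arguments sorted_head_le {a s z}.
Arguments sorted_le_last {a s z}.

Definition f1 {r s} (p : 'I_r * 'I_s) : nat := p.1.
Definition f2 {r s} (p : 'I_r * 'I_s) : nat := p.2.
Definition stp {r s} (x y : 'I_r * 'I_s) : bool :=
  [&& (f1 x <= f1 y <= (f1 x).+1), (f2 x <= f2 y <= (f2 x).+1) & x != y].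

Lemma cov_path r s (f : 'I_r * 'I_s -> nat) (x : 'I_r * 'I_s) t :
  path (fun x y => f x <= f y <= (f x).+1) x t ->
  forall k, f x <= k <= f (last x t) -> k \in map f (x :: t).
Proof.
elim: t x => [|y t IH] x /=.
  by move=> _ k hk; rewrite mem_seq1; apply/eqP; lia.
move=> /andP [/andP [h1 h2] hp] k /andP [hk1 hk2].
rewrite inE; case: (eqVneq k (f x)) => //= hkx.
apply: IH => //; apply/andP; split => //; lia.
Qed.

Lemma path_good r s (x : 'I_r * 'I_s) t : path (@stp r s) x t ->
  [/\ uniq (x :: t), sorted leq (map (@f1 r s) (x :: t)),
      sorted leq (map (@f2 r s) (x :: t)),
      forall k, f1 x <= k <= f1 (last x t) -> k \in map (@f1 r s) (x :: t) &
      forall k, f2 x <= k <= f2 (last x t) -> k \in map (@f2 r s) (x :: t)].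
Proof.
move=> hp; split.
- apply: (@map_uniq _ _ (fun p => f1 p + f2 p)).
  apply: (sorted_uniq ltn_trans ltnn) => /=.
  change (path ltn ((fun p => f1 p + f2 p) x) (map (fun p => f1 p + f2 p) t)).
  rewrite path_map; apply: sub_path hp => a b /and3P [/andP[h1 h2] /andP[h3 h4] hne] /=.
  have : (f1 a != f1 b) || (f2 a != f2 b).
    apply: contraR hne; rewrite negb_or !negbK => /andP [/eqP e1 /eqP e2].
    move: e1 e2; case: a {h1 h2 h3 h4} => a1 a2; case: b => b1 b2; rewrite /f1 /f2 /= => /val_inj -> /val_inj -> //=.
  move=> /orP [] h; lia.
- rewrite /= path_map; apply: sub_path hp => a b /and3P [/andP[h1 h2] _ _] //.
- rewrite /= path_map; apply: sub_path hp => a b /and3P [_ /andP[h1 h2] _] //.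
- apply: cov_path; apply: sub_path hp => a b /and3P [h _ _] //.
- apply: cov_path; apply: sub_path hp => a b /and3P [_ h _] //.
Qed.

Lemma good_path r s (x : 'I_r * 'I_s) t :
  uniq (x :: t) -> sorted leq (map f1 (x :: t)) -> sorted leq (map f2 (x :: t)) ->
  (forall k, f1 x <= k <= f1 (last x t) -> k \in map f1 (x :: t)) ->
  (forall k, f2 x <= k <= f2 (last x t) -> k \in map f2 (x :: t)) ->
  path stp x t.
Proof.
elim: t x => [|y t IH] x //=.
move=> /andP [hxn hu] /andP [hx1 hs1] /andP [hx2 hs2] hc1 hc2.
have hy1 : forall z, z \in map f1 (y :: t) -> f1 y <= z by move=> z; apply: sorted_head_le.
have hy2 : forall z, z \in map f2 (y :: t) -> f2 y <= z by move=> z; apply: sorted_head_le.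
have hl1 : f1 y <= f1 (last y t).
  rewrite -(last_map f1); exact: (@sorted_le_last (f1 y) (map f1 t) (f1 y) hs1 (mem_head _ _)).
have hl2 : f2 y <= f2 (last y t).
  rewrite -(last_map f2); exact: (@sorted_le_last (f2 y) (map f2 t) (f2 y) hs2 (mem_head _ _)).
apply/andP; split.
  rewrite /stp hx1 hx2 /=.
  have -> : x != y by apply: contraNneq hxn => ->; exact: mem_head.
  rewrite andbT; apply/andP; split.
    rewrite leqNgt; apply/negP => hlt.
    have := hc1 (f1 x).+1; rewrite leqnSn /= => /(_ (ltnW (leq_trans hlt hl1))).
    rewrite inE eqn_leq ltnn /= => /hy1; lia.
  rewrite leqNgt; apply/negP => hlt.
  have := hc2 (f2 x).+1; rewrite leqnSn /= => /(_ (ltnW (leq_trans hlt hl2))).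
  rewrite inE eqn_leq ltnn /= => /hy2; lia.
apply: IH => // k /andP [hk1 hk2].
  have := hc1 k; rewrite hk2 (leq_trans hx1 hk1) /= => /(_ isT).
  rewrite inE => /orP [/eqP ek|//]; rewrite inE; apply/orP; left; apply/eqP; lia.
have := hc2 k; rewrite hk2 (leq_trans hx2 hk1) /= => /(_ isT).
rewrite inE => /orP [/eqP ek|//]; rewrite inE; apply/orP; left; apply/eqP; lia.
Qed.

Definition Qp {r s} (i j : nat) (c : seq ('I_r * 'I_s)) : bool :=
  if c is x :: t then
    [&& f1 x == i, f2 x == j, path stp x t, f1 (last x t) == r.-1 & f2 (last x t) == s.-1]
  else false.

Lemma map_f1 r s (c : seq ('I_r * 'I_s)) : map f1 c = map (@nat_of_ord r) (map fst c).
Proof. by rewrite -map_comp. Qed.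
Lemma map_f2 r s (c : seq ('I_r * 'I_s)) : map f2 c = map (@nat_of_ord s) (map snd c).
Proof. by rewrite -map_comp. Qed.

Lemma charac r s (hr : 0 < r) (hs : 0 < s) (c : seq ('I_r * 'I_s)) :
  is_maximal_cell c = Qp 0 0 c.
Proof.
case: c => [|x t].
  apply/negbTE/negP => /and3P [_ /forallP /(_ (Ordinal hr)) //].
rewrite /is_maximal_cell /is_cell; apply/idP/idP.
  case/and3P => /and3P [hu hs1 hs2] /forallP hf1 /forallP hf2.
  have hs1' : sorted leq (map f1 (x :: t)) by [].
  have hs2' : sorted leq (map f2 (x :: t)) by [].
  have hin1 : forall k, k < r -> k \in map f1 (x :: t).
    move=> k hk; rewrite map_f1; have := hf1 (Ordinal hk).
    by move=> /(map_f val).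
  have hin2 : forall k, k < s -> k \in map f2 (x :: t).
    move=> k hk; rewrite map_f2; have := hf2 (Ordinal hk).
    by move=> /(map_f val).
  have e1 : f1 x == 0 by rewrite -leqn0; exact: sorted_head_le hs1' (hin1 0 hr).
  have e2 : f2 x == 0 by rewrite -leqn0; exact: sorted_head_le hs2' (hin2 0 hs).
  have l1 : f1 (last x t) == r.-1.
    have := sorted_le_last hs1' (hin1 r.-1 ltac:(lia)); rewrite last_map.
    have := ltn_ord (last x t).1; rewrite /f1; lia.
  have l2 : f2 (last x t) == s.-1.
    have := sorted_le_last hs2' (hin2 s.-1 ltac:(lia)); rewrite last_map.
    have := ltn_ord (last x t).2; rewrite /f2; lia.
  rewrite /= e1 e2 l1 l2 /= andbT; apply: good_path => // k /andP [_ hk].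
    by apply: hin1; move: hk; rewrite (eqP l1); lia.
  by apply: hin2; move: hk; rewrite (eqP l2); lia.
move=> /and5P [/eqP h1 /eqP h2 hp /eqP l1 /eqP l2].
case: (path_good _ _ _ _ hp) => hu hs1 hs2 hc1 hc2.
rewrite hu hs1 hs2 /=; apply/andP; split; apply/forallP => i.
  have := hc1 i; rewrite h1 l1; have := ltn_ord i.
  move=> hi /(_ ltac:(lia)); by rewrite (@map_f1 r s (x :: t)) (mem_map (@ord_inj r)).
have := hc2 i; rewrite h2 l2; have := ltn_ord i.
move=> hi /(_ ltac:(lia)); by rewrite (@map_f2 r s (x :: t)) (mem_map (@ord_inj s)).
Qed.

Lemma sum_tupleS (T : finType) l (F : seq T -> nat) :
  \sum_(t : l.+1.-tuple T) F t = \sum_(x : T) \sum_(t : l.-tuple T) F (x :: t).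
Proof.
rewrite pair_big /=.
rewrite (reindex (fun p : T * l.-tuple T => [tuple of p.1 :: p.2])) //=.
exists (fun t : l.+1.-tuple T => (thead t, [tuple of behead t])).
  by move=> [x t] _ /=; congr pair; apply: val_inj.
by move=> t _; rewrite [t in RHS]tuple_eta.
Qed.

Lemma sum_tuple0 (T : finType) (F : seq T -> nat) :
  \sum_(t : 0.-tuple T) F t = F [::].
Proof. rewrite (big_pred1 [tuple]) // => t; by rewrite [t]tuple0 /= eqxx. Qed.

Definition cnt r s (l i j : nat) : nat :=
  \sum_(t : l.-tuple ('I_r * 'I_s)) (@Qp r s i j t : nat).

Lemma cnt0 r s i j : cnt r s 0 i j = 0.
Proof. by rewrite /cnt (@sum_tuple0 _ (fun c => nat_of_bool (@Qp r s i j c))). Qed.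

Lemma cnt_out r s l i j : (r <= i) || (s <= j) -> cnt r s l i j = 0.
Proof.
move=> h; rewrite /cnt big1 // => t _; case: (tval t) => [|x t'] //=.
have := ltn_ord x.1; have := ltn_ord x.2; rewrite /f1 /f2.
move=> h2 h1; case: eqP => [e|] /=; last by [].
case: eqP => [e2|] /= //.
by move: h; rewrite -e -e2 leqNgt h1 leqNgt h2.
Qed.

Lemma sum_andb (I : finType) (b : bool) (P : I -> bool) :
  \sum_(i : I) ((b && P i) : nat) = b * \sum_(i : I) (P i : nat).
Proof. by case: b; rewrite ?mul1n ?mul0n // big1. Qed.

Lemma stp_split r s (x y : 'I_r * 'I_s) :
  (stp x y : nat) = ((f1 y == (f1 x).+1) && (f2 y == f2 x))
    + ((f1 y == f1 x) && (f2 y == (f2 x).+1))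
    + ((f1 y == (f1 x).+1) && (f2 y == (f2 x).+1)).
Proof.
have hxy : (x != y) = ~~ ((f1 y == f1 x) && (f2 y == f2 x)).
  congr negb; apply/eqP/andP => [-> //|[/eqP e1 /eqP e2]].
  by move: x y e1 e2 => [x1 x2] [y1 y2]; rewrite /f1 /f2 /= => /ord_inj -> /ord_inj ->.
rewrite /stp hxy; move: (f1 x) (f2 x) (f1 y) (f2 y) => a b c d.
repeat (case: eqP => ? /=); repeat (case: leP => ? /=); lia.
Qed.

Definition D r s l (y : 'I_r * 'I_s) : nat :=
  \sum_(t : l.-tuple ('I_r * 'I_s))
     ([&& path stp y t, f1 (last y t) == r.-1 & f2 (last y t) == s.-1] : nat).

Lemma cnt_S r s l i j : cnt r s l.+1 i j =
  \sum_(y : 'I_r * 'I_s) ((f1 y == i) && (f2 y == j)) * D r s l y.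
Proof.
rewrite /cnt (@sum_tupleS _ _ (fun c => nat_of_bool (@Qp r s i j c))).
apply: eq_bigr => y _; rewrite -sum_andb; apply: eq_bigr => t _ /=.
by rewrite !andbA.
Qed.

Lemma D0 r s (y : 'I_r * 'I_s) : D r s 0 y = (f1 y == r.-1) && (f2 y == s.-1).
Proof.
by rewrite /D (@sum_tuple0 _ (fun c => nat_of_bool [&& path stp y c, f1 (last y c) == r.-1 & f2 (last y c) == s.-1])) /=.
Qed.

Lemma DS r s l (x : 'I_r * 'I_s) :
  D r s l.+1 x = \sum_(y : 'I_r * 'I_s) stp x y * D r s l y.
Proof.
rewrite /D (@sum_tupleS _ _ (fun c => nat_of_bool [&& path stp x c, f1 (last x c) == r.-1 & f2 (last x c) == s.-1])).
apply: eq_bigr => y _; rewrite -sum_andb; apply: eq_bigr => t _ /=.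
by rewrite !andbA.
Qed.

Lemma pick_sum r s i j (hi : i < r) (hj : j < s) (F : 'I_r * 'I_s -> nat) :
  \sum_(y : 'I_r * 'I_s) ((f1 y == i) && (f2 y == j)) * F y = F (Ordinal hi, Ordinal hj).
Proof.
rewrite (bigD1 (Ordinal hi, Ordinal hj)) //= !eqxx mul1n big1 ?addn0 // => y hy.
case: eqP => e1; case: eqP => e2 //=; exfalso; move/eqP: hy; apply.
by move: y e1 e2 => [y1 y2]; rewrite /f1 /f2 /= => e1 e2; congr pair; apply: ord_inj.
Qed.

Lemma cnt_rec r s l i j : i < r -> j < s ->
  cnt r s l.+1 i j = [&& l == 0, i == r.-1 & j == s.-1]
     + cnt r s l i.+1 j + cnt r s l i j.+1 + cnt r s l i.+1 j.+1.
Proof.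
move=> hi hj; rewrite cnt_S pick_sum; case: l => [|l].
  by rewrite D0 !cnt0 /= !addn0.
rewrite DS !cnt_S /= add0n -!big_split /=; apply: eq_bigr => y _.
by rewrite stp_split /= !mulnDl.
Qed.

Lemma cnt_bound r s l i j : (r.-1 - i) + (s.-1 - j) + 1 < l -> cnt r s l i j = 0.
Proof.
elim: l i j => [|l IH] i j; first by [].
move=> hl; case: (boolP ((i < r) && (j < s))) => [/andP [hi hj]|h]; last first.
  by apply: cnt_out; move: h; rewrite negb_and -!leqNgt.
rewrite cnt_rec //.
have l0 : l != 0 by lia.
rewrite (negbTE l0) /=.
have t1 : cnt r s l i.+1 j = 0.
  case: (ltnP i.+1 r) => hi1; last by rewrite cnt_out // hi1.
  by apply: IH; lia.
have t2 : cnt r s l i j.+1 = 0.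
  case: (ltnP j.+1 s) => hj1; last by rewrite cnt_out // hj1 orbT.
  by apply: IH; lia.
have t3 : cnt r s l i.+1 j.+1 = 0.
  case: (ltnP i.+1 r) => hi1; last by rewrite cnt_out // hi1.
  case: (ltnP j.+1 s) => hj1; last by rewrite cnt_out // hj1 orbT.
  by apply: IH; lia.
by rewrite t1 t2 t3.
Qed.

Local Open Scope ring_scope.

Definition G (a b : nat) : {poly int} := \poly_(m < a.+1) ('C(a, m) * 'C(b, m))%:R.

Lemma coefG a b m : (G a b)`_m = ('C(a, m) * 'C(b, m))%:R.
Proof. by rewrite coef_poly; case: ltnP => // h; rewrite bin_small // mul0n. Qed.

Lemma G_a0 a : G a 0 = 1.
Proof. by apply/polyP => m; rewrite coefG coef1 bin0n; case: m => [|m] //=; rewrite ?bin0 ?muln0 ?mul0n ?mulnC ?muln0. Qed.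

Lemma G_0b b : G 0 b = 1.
Proof. by apply/polyP => m; rewrite coefG coef1 bin0n; case: m => [|m] //=; rewrite ?bin0 ?muln0 ?mul0n ?mulnC ?muln0. Qed.

Lemma G_rec a b : G a.+1 b.+1 = G a b.+1 + G a.+1 b + ('X - 1) * G a b.
Proof.
apply/polyP => m; rewrite mulrBl mul1r !coefD ?coefB ?coefN coefXM !coefG.
case: m => [|m] /=; first by rewrite !bin0; ring.
rewrite !binS !natrM !natrD; ring.
Qed.

Definition PP (c : nat -> nat -> nat -> nat) (a b : nat) : {poly int} :=
  \sum_(l < (a + b).+2) (c l a b)%:R * ('X - 1) ^+ ((a + b).+1 - l).

Lemma PP_shift (c : nat -> nat -> nat -> nat) a b (c0 : forall a b, c 0%N a b = 0%N) :
  PP c a b = \sum_(l < (a + b).+1) (c l.+1 a b)%:R * ('X - 1) ^+ ((a + b) - l).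
Proof. by rewrite /PP big_ord_recl c0 mul0r add0r. Qed.

Lemma T1 (c : nat -> nat -> nat -> nat) a b :
  \sum_(l < (a.+1 + b).+1) (c l a b)%:R * ('X - 1) ^+ ((a.+1 + b) - l) = PP c a b.
Proof. by rewrite addSn. Qed.

Lemma T2 (c : nat -> nat -> nat -> nat) a b :
  \sum_(l < (a + b.+1).+1) (c l a b)%:R * ('X - 1) ^+ ((a + b.+1) - l) = PP c a b.
Proof. by rewrite addnS. Qed.

Lemma T3 (c : nat -> nat -> nat -> nat) a b (hb : c (a + b).+2 a b = 0%N) :
  \sum_(l < (a.+1 + b.+1).+1) (c l a b)%:R * ('X - 1) ^+ ((a.+1 + b.+1) - l)
  = ('X - 1) * PP c a b.
Proof.
rewrite addSn addnS big_ord_recr /= hb mul0r addr0 /PP mulr_sumr.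
apply: eq_bigr => l _; rewrite subSn; last by have := ltn_ord l; lia.
by rewrite exprS mulrCA.
Qed.

Lemma poly_part (A B : nat) (c : nat -> nat -> nat -> nat)
  (c0 : forall a b, c 0%N a b = 0%N)
  (crec : forall l a b, (a <= A)%N -> (b <= B)%N ->
     (c l.+1 a b = ([&& l == 0%N, a == 0%N & b == 0%N] : nat)
       + (if a is a'.+1 then c l a' b else 0%N)
       + (if b is b'.+1 then c l a b' else 0%N)
       + (if a is a'.+1 then if b is b'.+1 then c l a' b' else 0%N else 0%N))%N)
  (cbd : forall l a b, (a <= A)%N -> (b <= B)%N -> (a + b + 1 < l)%N -> c l a b = 0%N) :
  forall a b, (a <= A)%N -> (b <= B)%N -> PP c a b = G a b.
Proof.
elim=> [|a IHa] b ha hb.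
  elim: b hb => [|b IHb] hb.
    rewrite /PP !big_ord_recl big_ord0 c0 /=.
    have -> : bump 0 0 = 1%N by [].
    rewrite (crec 0%N 0%N 0%N) // /= (_ : ((0+0).+1 - 1)%N = 0%N) //.
    by rewrite mul0r add0r addr0 expr0 mulr1 G_a0.
  rewrite PP_shift //.
  rewrite (eq_bigr (fun l : 'I_(0 + b.+1).+1 => (c l 0%N b)%:R * ('X - 1) ^+ ((0 + b.+1) - l))).
    by rewrite T2 IHb ?G_0b // ltnW.
  by move=> l _; rewrite crec //= !addn0 andbF.
elim: b hb => [|b IHb] hb.
  rewrite PP_shift //.
  rewrite (eq_bigr (fun l : 'I_(a.+1 + 0).+1 => (c l a 0%N)%:R * ('X - 1) ^+ ((a.+1 + 0) - l))).
    by rewrite T1 IHa ?G_a0 // ltnW.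
  by move=> l _; rewrite crec //= !addn0 andbF.
rewrite PP_shift //.
rewrite (eq_bigr (fun l : 'I_(a.+1 + b.+1).+1 =>
   (c l a b.+1)%:R * ('X - 1) ^+ ((a.+1 + b.+1) - l)
   + (c l a.+1 b)%:R * ('X - 1) ^+ ((a.+1 + b.+1) - l)
   + (c l a b)%:R * ('X - 1) ^+ ((a.+1 + b.+1) - l))); last first.
  move=> l _; rewrite crec //= andbF.
  rewrite (_ : (false + c l a b.+1 + c l a.+1 b + c l a b = c l a b.+1 + c l a.+1 b + c l a b)%N) //.
  by rewrite !natrD mulrDl mulrDl.
have -> : \sum_(i < (a.+1 + b.+1).+1)
   ((c i a b.+1)%:R * ('X - 1) ^+ (a.+1 + b.+1 - i)
   + (c i a.+1 b)%:R * ('X - 1) ^+ (a.+1 + b.+1 - i)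
   + (c i a b)%:R * ('X - 1) ^+ (a.+1 + b.+1 - i) : {poly int})
  = \sum_(i < (a.+1 + b.+1).+1) (c i a b.+1)%:R * ('X - 1) ^+ (a.+1 + b.+1 - i)
   + \sum_(i < (a.+1 + b.+1).+1) (c i a.+1 b)%:R * ('X - 1) ^+ (a.+1 + b.+1 - i)
   + \sum_(i < (a.+1 + b.+1).+1) (c i a b)%:R * ('X - 1) ^+ (a.+1 + b.+1 - i).
  by rewrite !big_split.
rewrite (T1 c a b.+1) (T2 c a.+1 b) (T3 c a b); last first.
  by apply: cbd; [exact: ltnW | exact: ltnW | lia].
rewrite (IHa b.+1 (ltnW ha) hb) (IHa b (ltnW ha) (ltnW hb)) (IHb (ltnW hb)).
by rewrite G_rec.
Qed.

Lemma sum_widen (V : nmodType) n K (F : nat -> V) : (n <= K)%N ->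
  (forall m, (n <= m < K)%N -> F m = 0) -> \sum_(m < n) F m = \sum_(m < K) F m.
Proof.
move=> hnK hF; rewrite -!(big_mkord xpredT) (big_cat_nat (leq0n n) hnK) /=.
rewrite [X in _ + X]big_nat_cond [X in _ + X]big1 ?addr0 // => m /andP [hm _]; exact: hF.
Qed.

Lemma sum_card (I : finType) (P : pred I) (w : {poly int}) :
  \sum_(i | P i) w = (\sum_(i : I) (P i : nat))%:R * w.
Proof.
rewrite big_mkcond natr_sum mulr_suml; apply: eq_bigr => i _.
by case: (P i); rewrite ?mul1r ?mul0r.
Qed.

Local Open Scope nat_scope.
Lemma crec_c r s (hr : (0 < r)%N) (hs : (0 < s)%N) l a b : (a <= r.-1)%N -> (b <= s.-1)%N ->
  (cnt r s l.+1 (r.-1 - a) (s.-1 - b) = ([&& l == 0%N, a == 0%N & b == 0%N] : nat)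
       + (if a is a'.+1 then cnt r s l (r.-1 - a') (s.-1 - b) else 0%N)
       + (if b is b'.+1 then cnt r s l (r.-1 - a) (s.-1 - b') else 0%N)
       + (if a is a'.+1 then if b is b'.+1 then cnt r s l (r.-1 - a') (s.-1 - b') else 0%N else 0%N))%N.
Proof.
move=> ha hb; rewrite cnt_rec; [|lia|lia].
have er : forall a', (a'.+1 <= r.-1)%N -> ((r.-1 - a'.+1).+1 = r.-1 - a')%N by move=> a' h; lia.
have es : forall b', (b'.+1 <= s.-1)%N -> ((s.-1 - b'.+1).+1 = s.-1 - b')%N by move=> b' h; lia.
have orr : forall j, (r <= (r.-1 - 0).+1)%N || (s <= j)%N by move=> j; rewrite subn0 prednK // leqnn.
have oss : forall i, (r <= i)%N || (s <= (s.-1 - 0).+1)%N by move=> i; rewrite subn0 prednK // leqnn orbT.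
have cr : forall j, cnt r s l (r.-1 - 0).+1 j = 0 by move=> j; apply: cnt_out.
have cs : forall i, cnt r s l i (s.-1 - 0).+1 = 0 by move=> i; apply: cnt_out.
case: a ha => [|a] ha; case: b hb => [|b] hb.
- by rewrite !cr !cs !subn0 !eqxx !addn0.
- rewrite (es b hb) !cr subn0 eqxx /=.
  have -> : (s.-1 - b.+1 == s.-1) = false by apply/negbTE; lia.
  by rewrite andbF !addn0.
- rewrite (er a ha) !cs subn0 eqxx /=.
  have -> : (r.-1 - a.+1 == r.-1) = false by apply/negbTE; lia.
  by rewrite andbF /= !addn0.
- rewrite (er a ha) (es b hb) /=.
  have -> : (r.-1 - a.+1 == r.-1) = false by apply/negbTE; lia.
  by rewrite andbF.
Qed.
Local Open Scope ring_scope.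

Theorem mainTheorem16 (r s : nat) (hr : (1 <= r)%N) (hs : (1 <= s)%N) :
  \sum_(l < (r * s).+1)
     \sum_(c : l.-tuple ('I_r * 'I_s) | is_maximal_cell c)
        ('X - 1) ^+ (r + s - l - 1)
  = \sum_(m < (minn r.-1 s.-1).+1)
        ('C(r.-1, m) * 'C(s.-1, m))%:R * 'X^m :> {poly int}.
Proof.
set c := fun l a b => cnt r s l (r.-1 - a) (s.-1 - b).
have HP : PP c r.-1 s.-1 = G r.-1 s.-1.
  apply: (@poly_part r.-1 s.-1) => //.
  - by move=> a b; rewrite /c cnt0.
  - by move=> l a b ha hb; rewrite /c crec_c.
  - by move=> l a b ha hb hl; rewrite /c cnt_bound //; lia.
rewrite (eq_bigr (fun l : 'I_(r * s).+1 => (cnt r s l 0 0)%:R * ('X - 1) ^+ (r + s - l - 1))); last first.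
  move=> l _; rewrite (eq_bigl (fun t : l.-tuple ('I_r * 'I_s) => Qp 0 0 t)).
    by rewrite sum_card.
  by move=> t; exact: charac.
rewrite -(@sum_widen _ (r.-1 + s.-1).+2 _ (fun l => (cnt r s l 0 0)%:R * ('X - 1) ^+ (r + s - l - 1))).
- rewrite (_ : \sum_(m < (r.-1 + s.-1).+2) (cnt r s m 0 0)%:R * ('X - 1) ^+ (r + s - m - 1)
      = PP c r.-1 s.-1); last first.
    rewrite /PP; apply: eq_bigr => l _; rewrite /c !subnn.
    by congr (_ * _ ^+ _); lia.
  rewrite HP /G poly_def.
  rewrite -(@sum_widen _ (minn r.-1 s.-1).+1 _ (fun m => ('C(r.-1, m) * 'C(s.-1, m))%:R *: 'X^m)).
  + by apply: eq_bigr => m _; rewrite scaler_nat mulr_natl.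
  + by rewrite ltnS geq_minl.
  + move=> m /andP [hm _]; rewrite minnE in hm.
    case: (leqP m r.-1) => h1.
      by rewrite (@bin_small s.-1) ?muln0 ?scale0r //; lia.
    by rewrite (@bin_small r.-1) ?mul0n ?scale0r.
- nia.
- move=> m /andP [hm _]; rewrite cnt_bound ?mul0r //; lia.
Qed.
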